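(* Let $A$ be a densely defined closed operator in a complex Hilbert space $\mathcal{H}$ with $\operatorname{D}(A)\subset\operatorname{D}(A^* )$ and $\operatorname{Num}(A)\subset\{z:\operatorname{Im} z\ge 0\}$. Assume that for every sequence $a_n>0$ with $a_n\to0$ one has $K(a_n)\to\infty$, where $$K(a)=\inf\Big\{\tfrac{\operatorname{Im}\langle Av,v\rangle}{(\operatorname{Re}\langle Av,v\rangle)^2}: v\in\operatorname{D}(A),\|v\|=1,\ 0<|\langle Av,v\rangle|<a,\ \operatorname{Re}\langle Av,v\rangle>0\Big\}.$$ Let $\alpha\in\operatorname{Num}(A)$ with $0<\operatorname{Re}\alpha<1$, $0<\operatorname{Im}\alpha<1$, $|\alpha|<1$ and $(0,\alpha]\subset\operatorname{Num}(A)$, let $(\varepsilon_n)\subset(0,1)$ with $\varepsilon_n\to0$, and let $(u_n)\subset\operatorname{D}(A)$ with $\|u_n\|=1$ and $\langle Au_n,u_n\rangle=\varepsilon_n\alpha$. Let $(f_n)\subset\operatorname{D}(A)$ satisfy $\max(\sup_n\|f_n\|,\sup_n\|Af_n\|,\sup_n\|A^*f_n\|)<\infty$. Then $$\lim_{n\to\infty}\big(|\langle f_n,Au_n\rangle|+|\langle f_n,A^*u_n\rangle|\big)=0.$$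
   Context: $\operatorname{Num}(A)=\{\langle Af,f\rangle: f\in\operatorname{D}(A),\|f\|=1\}$; $(0,\alpha]$ denotes the half-open segment $\{t\alpha: 0<t\le1\}$. The infimum of the empty set is $+\infty$. *)

(* Defs.v *)
From Stdlib Require Export Reals.
Open Scope R_scope.

Record Cplx := mkC { Re : R; Im : R }.

Definition Cadd (z w : Cplx) : Cplx := mkC (Re z + Re w) (Im z + Im w).
Definition Cmul (z w : Cplx) : Cplx :=
  mkC (Re z * Re w - Im z * Im w) (Re z * Im w + Im z * Re w).
Definition Cconj (z : Cplx) : Cplx := mkC (Re z) (- Im z).
Definition C0 : Cplx := mkC 0 0.
Definition C1 : Cplx := mkC 1 0.
Definition Cm1 : Cplx := mkC (-1) 0.
Definition RtoC (r : R) : Cplx := mkC r 0.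
Definition Cabs (z : Cplx) : R := sqrt (Re z * Re z + Im z * Im z).

(** * Complex inner product spaces
    Inner product: linear in the first argument, conjugate-linear in the second. *)
Record PreHilbert := {
  carrier :> Type;
  vadd : carrier -> carrier -> carrier;
  vzero : carrier;
  vscal : Cplx -> carrier -> carrier;
  inner : carrier -> carrier -> Cplx;
  vadd_assoc : forall x y z, vadd x (vadd y z) = vadd (vadd x y) z;
  vadd_comm : forall x y, vadd x y = vadd y x;
  vadd_0 : forall x, vadd vzero x = x;
  vadd_opp : forall x, vadd x (vscal Cm1 x) = vzero;
  vscal_1 : forall x, vscal C1 x = x;
  vscal_assoc : forall a b x, vscal a (vscal b x) = vscal (Cmul a b) x;
  vscal_addl : forall a b x, vscal (Cadd a b) x = vadd (vscal a x) (vscal b x);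
  vscal_addr : forall a x y, vscal a (vadd x y) = vadd (vscal a x) (vscal a y);
  inner_addl : forall x y z, inner (vadd x y) z = Cadd (inner x z) (inner y z);
  inner_scall : forall a x y, inner (vscal a x) y = Cmul a (inner x y);
  inner_conj : forall x y, inner y x = Cconj (inner x y);
  inner_pos : forall x, 0 <= Re (inner x x);
  inner_def : forall x, inner x x = C0 -> x = vzero
}.

Arguments vadd {_}. Arguments vzero {_}. Arguments vscal {_}. Arguments inner {_}.

Definition vsub {H : PreHilbert} (x y : H) : H := vadd x (vscal Cm1 y).
Definition hnorm {H : PreHilbert} (x : H) : R := sqrt (Re (inner x x)).

Definition complete (H : PreHilbert) : Prop :=
  forall u : nat -> H,
    (forall eps, eps > 0 -> exists N, forall n m, (n >= N)%nat -> (m >= N)%nat ->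
        hnorm (vsub (u n) (u m)) < eps) ->
    exists l : H, forall eps, eps > 0 -> exists N, forall n, (n >= N)%nat ->
        hnorm (vsub (u n) l) < eps.

Definition hconverges {H : PreHilbert} (u : nat -> H) (l : H) : Prop :=
  forall eps, eps > 0 -> exists N, forall n, (n >= N)%nat -> hnorm (vsub (u n) l) < eps.

Definition linear_operator {H : PreHilbert} (D : H -> Prop) (A : H -> H) : Prop :=
  D vzero /\
  (forall x y, D x -> D y -> D (vadd x y) /\ A (vadd x y) = vadd (A x) (A y)) /\
  (forall a x, D x -> D (vscal a x) /\ A (vscal a x) = vscal a (A x)).

Definition densely_defined {H : PreHilbert} (D : H -> Prop) : Prop :=
  forall x : H, forall eps, eps > 0 -> exists y, D y /\ hnorm (vsub x y) < eps.

Definition closed_operator {H : PreHilbert} (D : H -> Prop) (A : H -> H) : Prop :=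
  forall (x : nat -> H) (l y : H),
    (forall n, D (x n)) -> hconverges x l -> hconverges (fun n => A (x n)) y ->
    D l /\ A l = y.

Definition is_adjoint {H : PreHilbert} (D : H -> Prop) (A : H -> H)
    (Ds : H -> Prop) (As : H -> H) : Prop :=
  (forall g, Ds g <-> exists h, forall f, D f -> inner (A f) g = inner f h) /\
  (forall g f, Ds g -> D f -> inner (A f) g = inner f (As g)).

Definition Num {H : PreHilbert} (D : H -> Prop) (A : H -> H) (z : Cplx) : Prop :=
  exists f, D f /\ hnorm f = 1 /\ inner (A f) f = z.

Definition Kset {H : PreHilbert} (D : H -> Prop) (A : H -> H) (a : R) (q : R) : Prop :=
  exists v, D v /\ hnorm v = 1 /\
    0 < Cabs (inner (A v) v) /\ Cabs (inner (A v) v) < a /\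
    Re (inner (A v) v) > 0 /\
    q = Im (inner (A v) v) / (Re (inner (A v) v) * Re (inner (A v) v)).

(** [K_ge D A a M] means  M <= K(a) = inf (Kset D A a)  (inf of empty = +oo). *)
Definition K_ge {H : PreHilbert} (D : H -> Prop) (A : H -> H) (a M : R) : Prop :=
  forall q, Kset D A a q -> M <= q.

Definition K_to_infty {H : PreHilbert} (D : H -> Prop) (A : H -> H) (a : nat -> R) : Prop :=
  forall M, exists N, forall n, (n >= N)%nat -> K_ge D A (a n) M.

(* Main.v *)
Require Import Defs.
From Stdlib Require Import Reals Lra Psatz Classical.
Open Scope R_scope.

Lemma Cext (z w : Cplx) : Re z = Re w -> Im z = Im w -> z = w.
Proof. destruct z, w; simpl; intros; subst; reflexivity. Qed.

Lemma inner_addr (H : PreHilbert) (x y z : H) :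
  inner x (vadd y z) = Cadd (inner x y) (inner x z).
Proof.
  rewrite (inner_conj H (vadd y z) x), inner_addl.
  rewrite (inner_conj H y x), (inner_conj H z x).
  destruct (inner y x), (inner z x); unfold Cconj, Cadd; simpl; f_equal; ring.
Qed.

Lemma inner_scalr (H : PreHilbert) a (x y : H) :
  inner x (vscal a y) = Cmul (Cconj a) (inner x y).
Proof.
  rewrite (inner_conj H (vscal a y) x), inner_scall.
  rewrite (inner_conj H y x).
  destruct (inner y x), a; unfold Cconj, Cmul; simpl; f_equal; ring.
Qed.

Lemma inner_im0 (H : PreHilbert) (x : H) : Im (inner x x) = 0.
Proof.
  pose proof (inner_conj H x x) as E.
  apply (f_equal Im) in E. unfold Cconj in E; simpl in E. lra.
Qed.

Lemma inner_x0 (H : PreHilbert) (x : H) : inner x vzero = C0.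
Proof.
  assert (E: inner x vzero = Cadd (inner x vzero) (inner x vzero))
    by (rewrite <- inner_addr, vadd_0; reflexivity).
  apply Cext; unfold C0; simpl.
  - apply (f_equal Re) in E; unfold Cadd in E; simpl in E; lra.
  - apply (f_equal Im) in E; unfold Cadd in E; simpl in E; lra.
Qed.

Lemma expand_C (H : PreHilbert) (a b c d : H) s :
  inner (vadd a (vscal s b)) (vadd c (vscal s d)) =
  Cadd (Cadd (inner a c) (Cmul (Cconj s) (inner a d)))
       (Cmul s (Cadd (inner b c) (Cmul (Cconj s) (inner b d)))).
Proof.
  rewrite inner_addl, inner_scall, !inner_addr, !inner_scalr. reflexivity.
Qed.

Lemma expand_Re (H : PreHilbert) (a b c d : H) x y :
  Re (inner (vadd a (vscal (mkC x y) b)) (vadd c (vscal (mkC x y) d))) =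
  Re (inner a c) + (x * Re (inner a d) + y * Im (inner a d))
  + (x * Re (inner b c) - y * Im (inner b c)) + (x*x+y*y) * Re (inner b d).
Proof. rewrite expand_C; unfold Cadd, Cmul, Cconj; simpl; ring. Qed.

Lemma expand_Im (H : PreHilbert) (a b c d : H) x y :
  Im (inner (vadd a (vscal (mkC x y) b)) (vadd c (vscal (mkC x y) d))) =
  Im (inner a c) + (x * Im (inner a d) - y * Re (inner a d))
  + (x * Im (inner b c) + y * Re (inner b c)) + (x*x+y*y) * Im (inner b d).
Proof. rewrite expand_C; unfold Cadd, Cmul, Cconj; simpl; ring. Qed.

Lemma scal_Re (H : PreHilbert) (x y : H) k :
  Re (inner (vscal (RtoC k) x) (vscal (RtoC k) y)) = k*k * Re (inner x y).
Proof. rewrite inner_scall, inner_scalr; unfold Cmul, Cconj, RtoC; simpl; ring. Qed.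
Lemma scal_Im (H : PreHilbert) (x y : H) k :
  Im (inner (vscal (RtoC k) x) (vscal (RtoC k) y)) = k*k * Im (inner x y).
Proof. rewrite inner_scall, inner_scalr; unfold Cmul, Cconj, RtoC; simpl; ring. Qed.

Lemma real_cs a b Z : (forall t, 0 <= a - 2*t*Z + t*t*Z*b) -> 0 <= a -> 0 <= b -> 0 <= Z -> Z <= a*b.
Proof.
  intros Ht Ha Hb HZ.
  destruct (Rlt_or_le 0 b) as [Hb'|Hb'].
  - specialize (Ht (/b)).
    assert (E: /b*/b*Z*b = Z * /b) by (field; lra). rewrite E in Ht.
    assert (E2: 2*/b*Z = 2*(Z*/b)) by ring. rewrite E2 in Ht.
    assert (Z*/b <= a) by lra.
    apply Rmult_le_compat_r with (r:=b) in H; [|lra].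
    replace (Z*/b*b) with Z in H by (field; lra). lra.
  - assert (b = 0) by lra. subst.
    destruct (Req_dec Z 0); [subst; lra|].
    specialize (Ht ((a+1)/(2*Z))).
    replace ((a+1)/(2*Z)*((a+1)/(2*Z))*Z*0) with 0 in Ht by ring.
    replace (2*((a+1)/(2*Z))*Z) with (a+1) in Ht by (field; lra). lra.
Qed.

Definition Nm {H : PreHilbert} (x : H) := Re (inner x x).

Lemma N_ge0 (H : PreHilbert) (x : H) : 0 <= Nm x.
Proof. apply inner_pos. Qed.

Lemma cs (H : PreHilbert) (x y : H) :
  Re (inner x y) * Re (inner x y) + Im (inner x y) * Im (inner x y) <= Nm x * Nm y.
Proof.
  set (zr := Re (inner x y)). set (zi := Im (inner x y)).
  apply real_cs.
  - intro t. pose proof (N_ge0 H (vadd x (vscal (mkC (-t*zr) (-t*zi)) y))) as P.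
    unfold Nm in P. rewrite expand_Re in P.
    rewrite (inner_conj H x y) in P. unfold Cconj in P; simpl in P.
    fold zr zi in P. unfold Nm. nra.
  - apply N_ge0.
  - apply N_ge0.
  - nra.
Qed.

Lemma normalize (H : PreHilbert) (D : H -> Prop) (A : H -> H) (Hlin : linear_operator D A)
  (v : H) : D v -> 0 < Nm v ->
  exists v', D v' /\ hnorm v' = 1 /\
    Re (inner (A v') v') = Re (inner (A v) v) / Nm v /\
    Im (inner (A v') v') = Im (inner (A v) v) / Nm v.
Proof.
  intros Dv Nv. set (k := / sqrt (Nm v)).
  assert (Hs: 0 < sqrt (Nm v)) by (apply sqrt_lt_R0; lra).
  assert (Hk: k * k = / Nm v).
  { unfold k. rewrite <- Rinv_mult, sqrt_sqrt; lra. }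
  destruct Hlin as [_ [_ Hsc]]. destruct (Hsc (RtoC k) v Dv) as [D' A'].
  exists (vscal (RtoC k) v). split; [exact D'|]. rewrite A'.
  split; [|split].
  - unfold hnorm. rewrite scal_Re, Hk. fold (Nm v).
    rewrite Rinv_l; [apply sqrt_1|lra].
  - rewrite scal_Re, Hk. unfold Rdiv; ring.
  - rewrite scal_Im, Hk. unfold Rdiv; ring.
Qed.

Lemma im_nonneg (H : PreHilbert) (D : H -> Prop) (A : H -> H) (Hlin : linear_operator D A)
  (Hnum : forall z, Num D A z -> 0 <= Im z) (v : H) : D v -> 0 <= Im (inner (A v) v).
Proof.
  intro Dv. destruct (Rlt_or_le 0 (Nm v)) as [P|P].
  - destruct (normalize H D A Hlin v Dv P) as [v' [D' [h1 [_ hi]]]].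
    assert (0 <= Im (inner (A v') v')) by (apply Hnum; exists v'; auto).
    rewrite hi in H0. unfold Rdiv in H0.
    assert (0 < / Nm v) by (apply Rinv_0_lt_compat; lra).
    nra.
  - assert (Nv0 : Nm v = 0) by (pose proof (N_ge0 H v); lra).
    assert (inner v v = C0) by (apply Cext; [exact Nv0| rewrite inner_im0; reflexivity]).
    apply inner_def in H0. subst v. rewrite inner_x0. simpl; lra.
Qed.

Lemma Kunif (H : PreHilbert) (D : H -> Prop) (A : H -> H) (Hlin : linear_operator D A)
  (eps : nat -> R) (Heps : forall n, 0 < eps n < 1) (Heps0 : Un_cv eps 0)
  (HK : forall a : nat -> R, (forall n, 0 < a n) -> Un_cv a 0 -> K_to_infty D A a)
  (K0 : R) : exists a, 0 < a /\ forall v, D v -> 0 < Nm v ->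
     0 < Re (inner (A v) v) ->
     Re (inner (A v) v) * Re (inner (A v) v) + Im (inner (A v) v) * Im (inner (A v) v)
        < a * a * (Nm v * Nm v) ->
     K0 * (Re (inner (A v) v) * Re (inner (A v) v)) <= Im (inner (A v) v) * Nm v.
Proof.
  destruct (HK eps (fun n => proj1 (Heps n)) Heps0 K0) as [N0 HN].
  specialize (HN N0 (le_n _)).
  exists (eps N0). split; [apply Heps|].
  intros v Dv Nv Rp Ab.
  set (a := eps N0) in *.
  assert (Ha: 0 < a) by apply Heps.
  destruct (normalize H D A Hlin v Dv Nv) as [v' [D' [h1 [hr hi]]]].
  set (qr := Re (inner (A v) v)) in *. set (qi := Im (inner (A v) v)) in *.
  assert (HNi : 0 < / Nm v) by (apply Rinv_0_lt_compat; lra).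
  assert (Kv: Kset D A a (Im (inner (A v') v') / (Re (inner (A v') v') * Re (inner (A v') v')))).
  { exists v'. split; [exact D'|]. split; [exact h1|].
    assert (Hc: Cabs (inner (A v') v') = sqrt ((qr*qr+qi*qi) * (/Nm v * / Nm v))).
    { unfold Cabs. rewrite hr, hi. apply f_equal. unfold Rdiv. ring. }
    assert (Hpos: 0 < (qr*qr+qi*qi) * (/Nm v * / Nm v)) by (apply Rmult_lt_0_compat; nra).
    rewrite Hc. split; [apply sqrt_lt_R0; exact Hpos|].
    split; [|split; [rewrite hr; unfold Rdiv; nra|reflexivity]].
    rewrite <- (sqrt_square a) by lra. apply sqrt_lt_1_alt. split; [lra|].
    apply Rmult_lt_reg_r with (r := Nm v * Nm v); [nra|].
    replace ((qr * qr + qi * qi) * (/ Nm v * / Nm v) * (Nm v * Nm v)) with (qr*qr+qi*qi)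
      by (field; lra). lra. }
  specialize (HN _ Kv). rewrite hr, hi in HN.
  replace (qi / Nm v / (qr / Nm v * (qr / Nm v))) with (qi * Nm v / (qr*qr)) in HN
    by (field; lra).
  apply Rmult_le_compat_r with (r := qr*qr) in HN; [|nra].
  replace (qi * Nm v / (qr * qr) * (qr * qr)) with (qi * Nm v) in HN by (field; lra).
  lra.
Qed.

Lemma sq_le (z c : R) : 0 <= c -> z*z <= c*c -> z <= c /\ -c <= z.
Proof. intros. split; nra. Qed.

Lemma cs2 (a b c d : R) : (a*b+c*d)*(a*b+c*d) <= (a*a+c*c)*(b*b+d*d).
Proof.
  assert (E : (a*a+c*c)*(b*b+d*d) - (a*b+c*d)*(a*b+c*d) = (a*d-c*b)*(a*d-c*b)) by ring.
  pose proof (Rle_0_sqr (a*d-c*b)). unfold Rsqr in H. lra.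
Qed.

Lemma core (e R I B eta a K0 pr pi rr ri Qr Qi cr ci c2r c2i W : R)
  (he : 0 < e < 1) (hR : 0 < R < 1) (hI : 0 < I < 1) (hB : 1 <= B)
  (heta : 0 < eta) (ha : 0 < a)
  (hp : pr*pr+pi*pi <= B) (hr : rr*rr+ri*ri <= B) (hQ : Qr*Qr+Qi*Qi <= B*B)
  (hc : cr*cr+ci*ci <= B) (hc2 : c2r*c2r+c2i*c2i <= B) (hW : 0 <= W <= B)
  (he1 : e*(B*B) < eta*eta/4) (he2 : e*B <= /64) (he3 : 144*(e*B) < a*a)
  (hK0 : K0 = 32*B/(eta*eta) + 1)
  (Him : forall x y, 0 <= e*I + (x*pi - y*pr) + (x*ri + y*rr) + (x*x+y*y)*Qi)
  (HKv : forall x y,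
     let Req := e*R + (x*pr + y*pi) + (x*rr - y*ri) + (x*x+y*y)*Qr in
     let Imq := e*I + (x*pi - y*pr) + (x*ri + y*rr) + (x*x+y*y)*Qi in
     let Nv := 1 + (x*cr + y*ci) + (x*c2r - y*c2i) + (x*x+y*y)*W in
     0 < Nv -> 0 < Req -> Req*Req + Imq*Imq < a*a*(Nv*Nv) -> K0*(Req*Req) <= Imq*Nv) :
  pr*pr+pi*pi < eta*eta /\ rr*rr+ri*ri < eta*eta.
Proof.
  set (d1 := pi+ri). set (d2 := rr-pr). set (D2 := d1*d1+d2*d2).
  assert (hQi : Qi <= B) by nra.
  assert (hQr : -B <= Qr <= B) by (split; nra).
  assert (hD2 : D2 <= 4*B*e).
  { set (t := /(2*B)).
    assert (ht : t * B = /2) by (unfold t; field; lra).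
    assert (ht0 : 0 < t) by (unfold t; apply Rinv_0_lt_compat; lra).
    pose proof (Him (-t*d1) (-t*d2)) as H1.
    assert (E : e * I + (- t * d1 * pi - - t * d2 * pr) + (- t * d1 * ri + - t * d2 * rr) +
       (- t * d1 * (- t * d1) + - t * d2 * (- t * d2)) * Qi = e*I - t*D2 + t*t*D2*Qi)
      by (unfold D2, d1, d2; ring).
    rewrite E in H1.
    assert (0 <= D2) by (unfold D2; nra).
    assert (t*t*D2*Qi <= t*t*D2*B) by (apply Rmult_le_compat_l; [nra|lra]).
    assert (t*t*D2*B = t*D2/2) by (replace (t*t*D2*B) with (t*B*t*D2) by ring; rewrite ht; field).
    assert (t*D2 <= 2*e*I) by lra.
    assert (H5 : D2 <= 2*e*I / t) by (apply Rmult_le_reg_r with t; [lra|]; unfold Rdiv; rewrite Rmult_assoc, Rinv_l; lra).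
    replace (2*e*I/t) with (4*B*e*I) in H5 by (unfold t; field; lra).
    nra. }
  set (s1 := pr+rr). set (s2 := pi-ri). set (S2 := s1*s1+s2*s2).
  assert (hS2 : S2 < eta*eta).
  { apply Rnot_le_lt. intro HS.
    set (S := sqrt S2). set (k := sqrt e).
    assert (HS2p : 0 <= S2) by (unfold S2; nra).
    assert (ES : S*S = S2) by (apply sqrt_sqrt; lra).
    assert (Ek : k*k = e) by (apply sqrt_sqrt; lra).
    assert (HSp : 0 <= S) by apply sqrt_pos.
    assert (Hkp : 0 < k) by (apply sqrt_lt_R0; lra).
    assert (HSe : eta <= S) by nra.
    set (t := k/S). set (x := t*s1). set (y := t*s2).
    assert (Exy : x*x+y*y = e).
    { unfold x, y, t. replace (k / S * s1 * (k / S * s1) + k / S * s2 * (k / S * s2))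
        with (k*k * S2 / (S*S)) by (unfold S2; field; try lra). rewrite ES, Ek. field; nra. }
    assert (Es : x*s1 + y*s2 = k*S).
    { unfold x, y, t. replace (k / S * s1 * s1 + k / S * s2 * s2) with (k * S2 / S)
        by (unfold S2; field; lra). rewrite <- ES. field; lra. }
    specialize (HKv x y). cbv zeta in HKv.
    set (Req := e*R + (x*pr + y*pi) + (x*rr - y*ri) + (x*x+y*y)*Qr) in HKv.
    set (Imq := e*I + (x*pi - y*pr) + (x*ri + y*rr) + (x*x+y*y)*Qi) in HKv.
    set (Nv := 1 + (x*cr + y*ci) + (x*c2r - y*c2i) + (x*x+y*y)*W) in HKv.
    assert (ER : Req = e*R + k*S + e*Qr) by (unfold Req; rewrite <- Es, Exy; unfold s1, s2; ring).
    assert (EI : Imq = e*I + (x*d1 + y*d2) + e*Qi) by (unfold Imq; rewrite Exy; unfold d1, d2; ring).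
    assert (Hx1 : (x*d1+y*d2)*(x*d1+y*d2) <= (2*B*e)*(2*B*e)).
    { assert ((x*d1+y*d2)*(x*d1+y*d2) <= (x*x+y*y)*D2) by (unfold D2; apply cs2).
      rewrite Exy in H.
      assert (e*D2 <= e*(4*B*e)) by (apply Rmult_le_compat_l; lra).
      assert (e*(4*B*e) <= (2*B*e)*(2*B*e)) by (assert (0 < e*e) by nra; nra).
      lra. }
    apply sq_le in Hx1; [|nra].
    assert (Hx2 : (x*cr+y*ci)*(x*cr+y*ci) <= /8 * /8).
    { assert ((x*cr+y*ci)*(x*cr+y*ci) <= (x*x+y*y)*(cr*cr+ci*ci)) by apply cs2.
      rewrite Exy in H. nra. }
    apply sq_le in Hx2; [|lra].
    assert (Hx3 : (x*c2r-y*c2i)*(x*c2r-y*c2i) <= /8 * /8).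
    { assert ((x*c2r-y*c2i)*(x*c2r-y*c2i) <= (x*x+y*y)*(c2r*c2r+c2i*c2i)) by (pose proof (cs2 x c2r (-y) c2i); nra).
      rewrite Exy in H. nra. }
    apply sq_le in Hx3; [|lra].
    assert (HNv : 3/4 <= Nv <= 2).
    { unfold Nv. rewrite Exy. split; nra. }
    assert (HkB : k*B < eta/2).
    { assert ((k*B)*(k*B) < (eta/2)*(eta/2)) by (replace ((k*B)*(k*B)) with (k*k*(B*B)) by ring; rewrite Ek; lra).
      nra. }
    assert (HReq_lo : k*eta/2 <= Req).
    { rewrite ER. assert (e*Qr >= -(e*B)) by nra.
      assert (e*B = k*(k*B)) by (rewrite <- Ek; ring). nra. }
    assert (HImq : 0 <= Imq) by (apply Him).
    assert (HImq_hi : Imq <= 4*B*e) by (rewrite EI; nra).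
    assert (HS2B : S2 <= 4*B) by (unfold S2, s1, s2; pose proof (Rle_0_sqr (pr-rr)); pose proof (Rle_0_sqr (pi+ri)); unfold Rsqr in *; nra).
    assert (HReq2 : Req*Req <= 16*(e*B)).
    { assert (HRh : Req <= k*S + 2*(e*B)) by (rewrite ER; assert (e*Qr <= e*B) by (apply Rmult_le_compat_l; lra); assert (e*R <= e*B) by (apply Rmult_le_compat_l; lra); lra).
      assert (0 <= Req) by (assert (0 < k*eta) by nra; lra).
      assert (Req*Req <= (k*S + 2*(e*B))*(k*S+2*(e*B))) by (apply Rmult_le_compat; lra).
      assert (HH : (k*S + 2*(e*B))*(k*S+2*(e*B)) <= 2*(k*k*(S*S)) + 8*(e*B)*(e*B)) by (pose proof (Rle_0_sqr (k*S - 2*(e*B))); unfold Rsqr in *; nra).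
      rewrite Ek, ES in HH.
      assert (e*S2 <= e*(4*B)) by (apply Rmult_le_compat_l; lra).
      assert ((e*B)*(e*B) <= e*B) by (assert (0 < e*B) by nra; nra). lra. }
    assert (HImq2 : Imq*Imq <= e*B).
    { assert (Imq*Imq <= (4*B*e)*(4*B*e)) by (apply Rmult_le_compat; lra).
      assert ((e*B)*(e*B) <= (e*B) * /64) by (apply Rmult_le_compat_l; nra). nra. }
    assert (Hq : Req*Req + Imq*Imq < a*a*(Nv*Nv)).
    { assert (Nv*Nv >= 9/16) by nra.
      assert (a*a*(Nv*Nv) >= a*a*(9/16)) by (apply Rmult_ge_compat_l; nra). nra. }
    specialize (HKv ltac:(lra) ltac:(nra) Hq).
    assert (Imq*Nv <= 8*B*e) by (assert (Imq*Nv <= (4*B*e)*2) by (apply Rmult_le_compat; lra); lra).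
    assert (Req*Req >= e*(eta*eta)/4).
    { assert (HH : (k*eta/2)*(k*eta/2) <= Req*Req) by (assert (0 < k*eta) by nra; apply Rmult_le_compat; lra).
      replace ((k*eta/2)*(k*eta/2)) with (k*k*(eta*eta)/4) in HH by field. rewrite Ek in HH. lra. }
    rewrite hK0 in HKv.
    assert ((32 * B / (eta * eta) + 1) * (e*(eta*eta)/4) = 8*B*e + e*(eta*eta)/4)
      by (field; nra).
    assert ((32 * B / (eta * eta) + 1) * (Req*Req) >= (32 * B / (eta * eta) + 1) * (e*(eta*eta)/4)).
    { apply Rmult_ge_compat_l; [|lra]. apply Rle_ge.
      assert (0 <= 32*B/(eta*eta)) by (apply Rmult_le_pos; [lra| left; apply Rinv_0_lt_compat; nra]).
      lra. }
    nra. }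
  assert (hD2' : D2 < eta*eta) by nra.
  unfold S2, s1, s2 in hS2. unfold D2, d1, d2 in hD2'.
  split; nra.
Qed.

Lemma Nm_hnorm (H : PreHilbert) (x : H) : Nm x = hnorm x * hnorm x.
Proof. unfold hnorm. rewrite sqrt_sqrt; [reflexivity|apply N_ge0]. Qed.

Lemma sqrt_lt_eta X eta : 0 <= X -> 0 < eta -> X < eta*eta -> sqrt X < eta.
Proof.
  intros. rewrite <- (sqrt_square eta) by lra. apply sqrt_lt_1_alt. lra.
Qed.

Theorem mainTheorem7 (H : PreHilbert) (Hcomp : complete H)
  (D : H -> Prop) (A : H -> H) (Ds : H -> Prop) (As : H -> H)
  (Hlin : linear_operator D A) (Hdense : densely_defined D)
  (Hclosed : closed_operator D A) (Hadj : is_adjoint D A Ds As)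
  (HDsub : forall x, D x -> Ds x)
  (Hnum : forall z, Num D A z -> 0 <= Im z)
  (HK : forall a : nat -> R, (forall n, 0 < a n) -> Un_cv a 0 -> K_to_infty D A a)
  (alpha : Cplx) (Halpha : Num D A alpha)
  (HRe : 0 < Re alpha < 1) (HIm : 0 < Im alpha < 1) (Habs : Cabs alpha < 1)
  (Hseg : forall t, 0 < t <= 1 -> Num D A (Cmul (RtoC t) alpha))
  (eps : nat -> R) (Heps : forall n, 0 < eps n < 1) (Heps0 : Un_cv eps 0)
  (u : nat -> H) (HuD : forall n, D (u n)) (Hu1 : forall n, hnorm (u n) = 1)
  (HAu : forall n, inner (A (u n)) (u n) = Cmul (RtoC (eps n)) alpha)
  (f : nat -> H) (HfD : forall n, D (f n))
  (Hfb : exists M, forall n,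
      hnorm (f n) <= M /\ hnorm (A (f n)) <= M /\ hnorm (As (f n)) <= M) :
  Un_cv (fun n => Cabs (inner (f n) (A (u n))) + Cabs (inner (f n) (As (u n)))) 0.
Proof.
  destruct Hfb as [M HM].
  set (B := M*M + 1).
  assert (HB : 1 <= B) by (unfold B; nra).
  assert (HNb : forall x : H, hnorm x <= M -> Nm x <= B).
  { intros x hx. rewrite Nm_hnorm. assert (0 <= hnorm x) by apply sqrt_pos.
    unfold B. assert (hnorm x * hnorm x <= M*M) by (apply Rmult_le_compat; lra). lra. }
  intros delta hdelta.
  set (eta := delta/2). assert (heta : 0 < eta) by (unfold eta; lra).
  set (K0 := 32*B/(eta*eta) + 1).
  destruct (Kunif H D A Hlin eps Heps Heps0 HK K0) as [a [ha Ha]].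
  set (e0 := Rmin (eta*eta/(4*(B*B))) (Rmin (/(64*B)) (a*a/(144*B)))).
  assert (he0 : 0 < e0).
  { unfold e0. repeat apply Rmin_pos.
    - apply Rdiv_lt_0_compat; nra.
    - apply Rinv_0_lt_compat; lra.
    - apply Rdiv_lt_0_compat; nra. }
  destruct (Heps0 e0 he0) as [N0 HN0].
  exists N0. intros n hn.
  specialize (HN0 n hn). unfold R_dist in HN0. rewrite Rminus_0_r in HN0.
  pose proof (Heps n) as hen. rewrite Rabs_pos_eq in HN0 by lra.
  set (e := eps n) in *. set (w := f n). set (v0 := u n).
  assert (hNu : Nm v0 = 1) by (rewrite Nm_hnorm; unfold v0; rewrite Hu1; ring).
  destruct (HM n) as [hm1 [hm2 hm3]].
  assert (hNw : Nm w <= B) by (apply HNb; exact hm1).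
  assert (hNAw : Nm (A w) <= B) by (apply HNb; exact hm2).
  assert (hNAsw : Nm (As w) <= B) by (apply HNb; exact hm3).
  assert (Dw : D w) by apply HfD. assert (Du : D v0) by apply HuD.
  destruct Hadj as [_ Hadj2].
  assert (Ep : inner (A v0) w = inner v0 (As w)) by (apply Hadj2; auto).
  assert (Er : inner (A w) v0 = inner w (As v0)) by (apply Hadj2; auto).
  destruct Hlin as [Hl0 [Hladd Hlsc]].
  assert (Dv : forall x y, D (vadd v0 (vscal (mkC x y) w)) /\
      A (vadd v0 (vscal (mkC x y) w)) = vadd (A v0) (vscal (mkC x y) (A w))).
  { intros x y. destruct (Hlsc (mkC x y) w Dw) as [D1 E1].
    destruct (Hladd _ _ Du D1) as [D2 E2]. split; [exact D2|]. rewrite E2, E1. reflexivity. }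
  assert (hNm0 : 0 <= Nm w) by apply N_ge0.
  assert (core_res := core e (Re alpha) (Im alpha) B eta a K0
    (Re (inner (A v0) w)) (Im (inner (A v0) w)) (Re (inner (A w) v0)) (Im (inner (A w) v0))
    (Re (inner (A w) w)) (Im (inner (A w) w)) (Re (inner v0 w)) (Im (inner v0 w))
    (Re (inner w v0)) (Im (inner w v0)) (Nm w) ltac:(lra) HRe HIm HB heta ha).
  destruct core_res as [Hp Hr].
  - rewrite Ep. pose proof (cs H v0 (As w)). rewrite hNu in H0. lra.
  - pose proof (cs H (A w) v0). rewrite hNu in H0. lra.
  - pose proof (cs H (A w) w).
    assert (Nm (A w) * Nm w <= B*B) by (apply Rmult_le_compat; try apply N_ge0; lra). lra.
  - pose proof (cs H v0 w). rewrite hNu in H0. lra.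
  - pose proof (cs H w v0). rewrite hNu in H0. lra.
  - lra.
  - assert (e < eta*eta/(4*(B*B))) by (pose proof (Rmin_l (eta*eta/(4*(B*B))) (Rmin (/(64*B)) (a*a/(144*B)))); fold e0 in H0; lra).
    apply Rmult_lt_compat_r with (r := B*B) in H0; [|nra].
    replace (eta * eta / (4 * (B * B)) * (B * B)) with (eta*eta/4) in H0 by (field; lra). lra.
  - assert (e < /(64*B)).
    { pose proof (Rmin_r (eta*eta/(4*(B*B))) (Rmin (/(64*B)) (a*a/(144*B)))).
      pose proof (Rmin_l (/(64*B)) (a*a/(144*B))). fold e0 in H0. lra. }
    apply Rmult_lt_compat_r with (r := B) in H0; [|lra].
    replace (/(64*B) * B) with (/64) in H0 by (field; lra). lra.
  - assert (e < a*a/(144*B)).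
    { pose proof (Rmin_r (eta*eta/(4*(B*B))) (Rmin (/(64*B)) (a*a/(144*B)))).
      pose proof (Rmin_r (/(64*B)) (a*a/(144*B))). fold e0 in H0. lra. }
    apply Rmult_lt_compat_r with (r := 144*B) in H0; [|lra].
    replace (a*a/(144*B) * (144*B)) with (a*a) in H0 by (field; lra). lra.
  - reflexivity.
  - intros x y. destruct (Dv x y) as [Dxy Axy].
    pose proof (im_nonneg H D A (conj Hl0 (conj Hladd Hlsc)) Hnum _ Dxy) as P.
    rewrite Axy, expand_Im in P. unfold v0 in P at 1. rewrite HAu in P.
    fold v0 in P. unfold Cmul, RtoC in P; simpl in P. fold e in P. lra.
  - intros x y. cbv zeta. intros hN hR hq.
    destruct (Dv x y) as [Dxy Axy].
    assert (ENv : Nm (vadd v0 (vscal (mkC x y) w)) =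
       1 + (x * Re (inner v0 w) + y * Im (inner v0 w)) + (x * Re (inner w v0) - y * Im (inner w v0)) + (x*x+y*y) * Nm w).
    { unfold Nm at 1. rewrite expand_Re. fold (Nm v0). rewrite hNu. reflexivity. }
    assert (ERe : Re (inner (A (vadd v0 (vscal (mkC x y) w))) (vadd v0 (vscal (mkC x y) w))) =
      e * Re alpha + (x * Re (inner (A v0) w) + y * Im (inner (A v0) w)) +
      (x * Re (inner (A w) v0) - y * Im (inner (A w) v0)) + (x * x + y * y) * Re (inner (A w) w)).
    { rewrite Axy, expand_Re. unfold v0 at 1 2. rewrite HAu. unfold Cmul, RtoC; simpl. fold e v0. ring. }
    assert (EIm : Im (inner (A (vadd v0 (vscal (mkC x y) w))) (vadd v0 (vscal (mkC x y) w))) =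
      e * Im alpha + (x * Im (inner (A v0) w) - y * Re (inner (A v0) w)) +
      (x * Im (inner (A w) v0) + y * Re (inner (A w) v0)) + (x * x + y * y) * Im (inner (A w) w)).
    { rewrite Axy, expand_Im. unfold v0 at 1 2. rewrite HAu. unfold Cmul, RtoC; simpl. fold e v0. ring. }
    pose proof (Ha _ Dxy) as Hv. rewrite ENv, ERe, EIm in Hv. apply Hv; auto.
  - unfold R_dist. rewrite Rminus_0_r.
    assert (E1 : inner w (A v0) = Cconj (inner (A v0) w)) by apply inner_conj.
    assert (E2 : inner w (As v0) = inner (A w) v0) by (rewrite Er; reflexivity).
    rewrite E1, E2. unfold Cabs, Cconj; simpl.
    assert (sqrt (Re (inner (A v0) w) * Re (inner (A v0) w) + - Im (inner (A v0) w) * - Im (inner (A v0) w)) < eta)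
      by (apply sqrt_lt_eta; nra).
    assert (sqrt (Re (inner (A w) v0) * Re (inner (A w) v0) + Im (inner (A w) v0) * Im (inner (A w) v0)) < eta)
      by (apply sqrt_lt_eta; nra).
    rewrite Rabs_pos_eq by (apply Rplus_le_le_0_compat; apply sqrt_pos).
    unfold eta in *. lra.
Qed.
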